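(* Let $\alpha\in[0,1)$, let $r>1/2$, and let $$X(\sqrt{t},\alpha)=\{\sqrt{n}\,e^{2\pi i n\alpha}\ :\ n\in\mathbb{N}\}\subset\mathbb{C}.$$ Consider, for a real number $m$ and $\beta\in[0,1)$, the system $$m-3r\sqrt{m}\le n\le m+3r\sqrt{m},\qquad \|n\alpha-\beta\|\le \frac{r}{2\sqrt{m}}\qquad (\ast)$$ in the unknown $n\in\mathbb{N}$. If $X(\sqrt{t},\alpha)$ is $r$-relatively dense, then for every real $m\ge16r^2$ and every $\beta\in[0,1)$ the system $(\ast)$ has a solution $n\in\mathbb{N}$. Conversely, if $(\ast)$ has a solution $n\in\mathbb{N}$ for every real $m\ge16r^2$ and every $\beta\in[0,1)$, then $X(\sqrt{t},\alpha)$ is $6r$-relatively dense.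
   Context: $\|x\|=\min_{i\in\mathbb{Z}}|x-i|$ denotes the distance from $x$ to the nearest integer. $B(x,r)$ denotes the open disk in $\mathbb{C}$ of radius $r$ centered at $x$. A set $X\subset\mathbb{C}$ is $r$-relatively dense if $B(x,r)\cap X\neq\emptyset$ for every $x\in\mathbb{C}$. *)

(* Defs.v *)
From Stdlib Require Import Reals.
From Coquelicot Require Import Coquelicot.
Open Scope R_scope.

(* ||x|| = distance from x to the nearest integer = min(frac x, 1 - frac x). *)
Definition dist_int (x : R) : R := Rmin (frac_part x) (1 - frac_part x).

Definition cexpi (theta : R) : C := (cos theta, sin theta).

Definition Xpt (alpha : R) (n : nat) : C :=
  Cmult (RtoC (sqrt (INR n))) (cexpi (2 * PI * INR n * alpha)).

Definition Xset (alpha : R) (z : C) : Prop :=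
  exists n : nat, (1 <= n)%nat /\ z = Xpt alpha n.

Definition rel_dense (X : C -> Prop) (r : R) : Prop :=
  forall x : C, exists y : C, X y /\ Cmod (Cminus y x) < r.

Definition system (alpha r m beta : R) (n : nat) : Prop :=
  m - 3 * r * sqrt m <= INR n <= m + 3 * r * sqrt m /\
  dist_int (INR n * alpha - beta) <= r / (2 * sqrt m).

(* Main.v *)
Require Import Defs.
From Stdlib Require Import Reals Lra Psatz.
From Coquelicot Require Import Coquelicot.
Open Scope R_scope.

Lemma sin_sq_dist (t : R) :
  0 <= dist_int t <= 1/2 /\ sin (PI * t) ^ 2 = sin (PI * dist_int t) ^ 2.
Proof.
  pose proof (Rplus_Int_part_frac_part t) as Ht.
  pose proof (base_fp t) as [Hf0 Hf1].
  set (k := Int_part t) in Ht. set (f := frac_part t) in Ht, Hf0, Hf1 |- *.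
  assert (Hs : sin (PI * t) ^ 2 = sin (PI * f) ^ 2).
  { rewrite Ht. replace (PI * (IZR k + f)) with (PI * f + IZR k * PI) by ring.
    rewrite sin_plus. rewrite (sin_eq_0_1 (IZR k * PI)) by (exists k; reflexivity).
    pose proof (sin2_cos2 (IZR k * PI)) as E.
    rewrite (sin_eq_0_1 (IZR k * PI)) in E by (exists k; reflexivity).
    unfold Rsqr in E. nra. }
  unfold dist_int; fold f. unfold Rmin; destruct (Rle_dec f (1 - f)).
  - split; [lra|exact Hs].
  - split; [lra|]. rewrite Hs. replace (PI * (1 - f)) with (PI - PI * f) by ring.
    rewrite sin_PI_x. reflexivity.
Qed.

Lemma cmod_sq (z : C) : Cmod z ^ 2 = fst z ^ 2 + snd z ^ 2.
Proof. unfold Cmod. rewrite pow2_sqrt; [reflexivity|nra]. Qed.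

Lemma dist_formula (alpha rho beta : R) (n : nat) : 0 <= rho ->
  Cmod (Cminus (Xpt alpha n) (rho * cos (2*PI*beta), rho * sin (2*PI*beta))) ^ 2 =
  (sqrt (INR n) - rho) ^ 2 + 4 * sqrt (INR n) * rho * sin (PI * (INR n * alpha - beta)) ^ 2.
Proof.
  intros Hr. rewrite cmod_sq. unfold Xpt, cexpi, Cminus, Cmult, RtoC, Cplus, Copp; simpl.
  set (s := sqrt (INR n)).
  set (th := 2 * PI * INR n * alpha). set (ps := 2*PI*beta).
  assert (E : cos (th - ps) = 1 - 2 * sin (PI * (INR n * alpha - beta)) ^ 2).
  { replace (th - ps) with (2 * (PI * (INR n * alpha - beta))) by (unfold th, ps; ring).
    rewrite cos_2a_sin. ring. }
  rewrite cos_minus in E.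
  assert (Hs : s ^ 2 = INR n) by (unfold s; rewrite pow2_sqrt; [reflexivity|apply pos_INR]).
  pose proof (sin2_cos2 th) as E1. pose proof (sin2_cos2 ps) as E2. unfold Rsqr in E1, E2.
  set (S := sin (PI * (INR n * alpha - beta))) in *.
  transitivity (s^2*(sin th * sin th + cos th * cos th) + rho^2*(sin ps * sin ps + cos ps * cos ps)
     - 2*s*rho*(cos th * cos ps + sin th * sin ps)); [ring|].
  rewrite E1, E2, E. ring.
Qed.
Lemma sin_lower (a : R) : 0 <= a <= 2 -> a - a^3/6 <= sin a.
Proof.
  intros Ha. assert (HP := PI2_3_2).
  destruct (SIN a) as [H _]; try lra.
  eapply Rle_trans; [|exact H].
  unfold sin_lb, sin_approx. cbn [sum_f_R0]. unfold sin_term. rewrite !INR_IZR_INZ. simpl.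
  assert (H5: 0 <= (a*a*a*a*a) * (42 - a*a)).
  { apply Rmult_le_pos; [|nra]. assert (0 <= a*a) by nra. assert (0 <= a*a*a*a) by nra. nra. }
  nra.
Qed.

Lemma polar (x : C) : exists beta, 0 <= beta < 1 /\
  x = (Cmod x * cos (2*PI*beta), Cmod x * sin (2*PI*beta)).
Proof.
  destruct x as [a b].
  assert (Hsq : Cmod (a,b) ^ 2 = a^2 + b^2) by (unfold Cmod; rewrite pow2_sqrt; simpl; [reflexivity|nra]).
  pose proof (Cmod_ge_0 (a,b)) as Hge.
  set (rho := Cmod (a,b)) in *.
  destruct (Req_dec rho 0) as [H0|H0].
  - exists 0. split; [lra|]. rewrite H0 in Hsq |- *. rewrite !Rmult_0_l. f_equal; nra.
  - assert (Hp : 0 < rho) by lra.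
    assert (Hab : -1 <= a / rho <= 1).
    { assert (-rho <= a <= rho) by (split; nra).
      split; apply Rmult_le_reg_r with rho; try lra;
        unfold Rdiv; rewrite Rmult_assoc, Rinv_l by lra; lra. }
    set (t := acos (a / rho)).
    pose proof (acos_bound (a/rho)) as Ht. fold t in Ht.
    assert (Hc : cos t = a / rho) by (apply cos_acos; exact Hab).
    assert (Hs : sin t = Rabs b / rho).
    { unfold t. rewrite sin_acos by exact Hab.
      replace (1 - (a/rho)²) with ((Rabs b / rho)²).
      - apply sqrt_Rsqr. apply Rdiv_le_0_compat; [apply Rabs_pos|lra].
      - unfold Rsqr.
        assert (Eb : Rabs b * Rabs b = b*b) by (rewrite <- Rabs_mult; apply Rabs_pos_eq; nra).
        assert (Er : rho * rho = a*a+b*b) by nra.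
        replace (Rabs b / rho * (Rabs b / rho)) with ((Rabs b * Rabs b) / (rho*rho)) by (field; lra).
        replace (1 - a / rho * (a / rho)) with ((rho*rho - a*a) / (rho*rho)) by (field; lra).
        rewrite Eb, Er. f_equal. ring. }
    assert (HPI := PI_RGT_0).
    destruct (Rle_dec 0 b) as [Hb|Hb].
    + exists (t / (2*PI)). split.
      * split; [apply Rdiv_le_0_compat; lra|]. apply (Rmult_lt_reg_r (2*PI)); [lra|].
        field_simplify; lra.
      * replace (2 * PI * (t / (2*PI))) with t by (field; lra).
        rewrite Hc, Hs, Rabs_pos_eq by lra. f_equal; field; lra.
    + assert (Htp : 0 < t).
      { destruct (Req_dec t 0) as [E|E]; [|lra]. rewrite E, sin_0 in Hs.
        rewrite Rabs_left in Hs by lra. apply Rmult_eq_compat_r with (r:=rho) in Hs.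
        field_simplify in Hs; lra. }
      exists (1 - t / (2*PI)). split.
      * split; [|assert (0 < t/(2*PI)) by (apply Rdiv_lt_0_compat; lra); lra].
        assert (t / (2*PI) <= 1/2) by (apply (Rmult_le_reg_r (2*PI)); [lra|]; field_simplify; lra). lra.
      * replace (2 * PI * (1 - t / (2*PI))) with (2*PI - t) by (field; lra).
        rewrite cos_minus, sin_minus, cos_2PI, sin_2PI, Hc, Hs, Rabs_left by lra.
        f_equal; field; lra.
Qed.

Lemma sqrt_sq_pos (x : R) : 0 <= x -> sqrt (x ^ 2) = x.
Proof. intros; apply sqrt_pow2; lra. Qed.

Lemma sin_bounds_d (d : R) : 0 <= d <= 1/2 -> 0 <= sin (PI * d) <= 4 * d.
Proof.
  intros Hd. assert (HP := PI_RGT_0). assert (H4 := PI_4).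
  split.
  - apply sin_ge_0; nra.
  - destruct (Req_dec d 0) as [E|E].
    + subst. rewrite Rmult_0_r, sin_0. lra.
    + assert (sin (PI*d) < PI * d) by (apply sin_lt_x; nra). nra.
Qed.

Theorem lemma6 (alpha r : R) (Halpha : 0 <= alpha < 1) (Hr : 1 / 2 < r) :
  (rel_dense (Xset alpha) r ->
     forall m beta : R, 16 * r ^ 2 <= m -> 0 <= beta < 1 ->
       exists n : nat, (1 <= n)%nat /\ system alpha r m beta n) /\
  ((forall m beta : R, 16 * r ^ 2 <= m -> 0 <= beta < 1 ->
       exists n : nat, (1 <= n)%nat /\ system alpha r m beta n) ->
     rel_dense (Xset alpha) (6 * r)).
Proof.
  assert (Hr0 : 0 < r) by lra.
  assert (HP3 := PI2_3_2). assert (HP4 := PI_4).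
  split.
  - intros Hd m beta Hm Hb.
    assert (Hq4 : 4 * r <= sqrt m).
    { rewrite <- (sqrt_sq_pos (4*r)) by lra. apply sqrt_le_1_alt. lra. }
    assert (Hqq : sqrt m ^ 2 = m) by (apply pow2_sqrt; nra).
    set (q := sqrt m) in *.
    destruct (Hd (q * cos (2*PI*beta), q * sin (2*PI*beta))) as [y [[n [Hn Hy]] Hlt]].
    subst y.
    pose proof (dist_formula alpha q beta n ltac:(lra)) as F.
    destruct (sin_sq_dist (INR n * alpha - beta)) as [Hd0 HS]. rewrite HS in F.
    pose proof (Cmod_ge_0 (Cminus (Xpt alpha n) (q * cos (2 * PI * beta), q * sin (2 * PI * beta)))) as Hc0.
    set (c := Cmod (Cminus (Xpt alpha n) (q * cos (2 * PI * beta), q * sin (2 * PI * beta)))) in *.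
    assert (Hc2 : c ^ 2 < r ^ 2) by nra.
    assert (Hs0 : 0 <= sqrt (INR n)) by apply sqrt_pos.
    assert (Hss : sqrt (INR n) ^ 2 = INR n) by (apply pow2_sqrt; apply pos_INR).
    set (s := sqrt (INR n)) in *.
    set (d := dist_int (INR n * alpha - beta)) in *.
    set (T := sin (PI * d)) in *.
    assert (HT2 : 0 <= T ^ 2) by nra.
    assert (Hsq : (s - q) ^ 2 < r ^ 2).
    { assert (0 <= 4 * s * q * T ^ 2) by (apply Rmult_le_pos; [|exact HT2]; repeat apply Rmult_le_pos; lra). nra. }
    assert (Hs1 : q - r < s) by nra.
    assert (Hs2 : s < q + r) by nra.
    exists n. split; [exact Hn|]. unfold system. fold q. fold d.
    split; [split|].
    + rewrite <- Hss, <- Hqq. nra.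
    + rewrite <- Hss, <- Hqq. nra.
    + destruct (Rle_lt_dec d (r / (2*q))) as [Hok|Hbad]; [exact Hok|exfalso].
      assert (Hrd : r < 2 * q * d).
      { assert (E : r / (2*q) * (2*q) = r) by (field; lra). nra. }
      assert (HTq : 3 * q ^ 2 * T ^ 2 < r ^ 2).
      { assert (0 <= (s-q)^2) by apply pow2_ge_0.
        assert (4 * s * q * T ^ 2 < r^2) by lra.
        assert (0 <= (4*s - 3*q) * (q * T^2)) by (apply Rmult_le_pos; nra).
        nra. }
      set (a := PI * d) in *.
      assert (Ha : 0 <= a <= 2) by (unfold a; split; nra).
      pose proof (sin_lower a Ha) as HL. fold T in HL.
      destruct (Rle_lt_dec a 1) as [Ha1|Ha1].
      * assert (HT : 5 * a / 6 <= T) by nra.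
        assert (Ha3 : 3 * d <= a) by (unfold a; nra).
        assert (HTq2 : 5 * r / 4 < T * q) by nra.
        nra.
      * assert (HT : 1/3 <= T) by nra.
        assert (HT9 : 1/9 <= T^2) by nra.
        assert (Hq16 : 16 * r^2 <= q^2) by nra.
        assert (q^2 * (1/9) <= q^2 * T^2) by (apply Rmult_le_compat_l; nra).
        nra.
  - intros H x.
    destruct (polar x) as [beta [Hb Hx]].
    pose proof (Cmod_ge_0 x) as Hrho0.
    set (rho := Cmod x) in *.
    assert (Key : forall m, 16 * r ^ 2 <= m -> 0 <= sqrt m ->
       forall n, (1 <= n)%nat -> system alpha r m beta n ->
       (sqrt (INR n) - rho) ^ 2 + 4 * sqrt (INR n) * rho * sin (PI * (INR n * alpha - beta)) ^ 2 < (6 * r) ^ 2 ->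
       exists y, Xset alpha y /\ Cmod (Cminus y x) < 6 * r).
    { intros m _ _ n Hn _ Hlt. exists (Xpt alpha n). split; [exists n; split; [exact Hn|reflexivity]|].
      rewrite Hx. rewrite <- (dist_formula alpha rho beta n Hrho0) in Hlt.
      pose proof (Cmod_ge_0 (Cminus (Xpt alpha n) (rho * cos (2 * PI * beta), rho * sin (2 * PI * beta)))).
      nra. }
    destruct (sin_sq_dist (INR 0 * alpha - beta)) as [_ _].
    destruct (Rle_lt_dec (4 * r) rho) as [Hbig|Hsmall].
    + assert (Hm : 16 * r ^ 2 <= rho ^ 2) by nra.
      destruct (H (rho ^ 2) beta Hm Hb) as [n [Hn Hsys]].
      apply (Key (rho ^ 2) Hm ltac:(apply sqrt_pos) n Hn Hsys).
      unfold system in Hsys. rewrite sqrt_sq_pos in Hsys by lra.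
      destruct Hsys as [[H1 H2] H3].
      destruct (sin_sq_dist (INR n * alpha - beta)) as [Hd0 HS]. rewrite HS.
      pose proof (sin_bounds_d _ Hd0) as HT.
      assert (Hs0 : 0 <= sqrt (INR n)) by apply sqrt_pos.
      assert (Hss : sqrt (INR n) ^ 2 = INR n) by (apply pow2_sqrt; apply pos_INR).
      set (s := sqrt (INR n)) in *.
      set (d := dist_int (INR n * alpha - beta)) in *.
      set (T := sin (PI * d)) in *.
      assert (Hdr : d * rho <= r / 2).
      { assert (E : r / (2*rho) * rho = r/2) by (field; lra). nra. }
      assert (HTr : T * rho <= 2 * r) by nra.
      assert (HTr0 : 0 <= T * rho) by (apply Rmult_le_pos; lra).
      assert (HTr2 : T^2 * rho^2 <= 4 * r^2).
      { replace (T^2 * rho^2) with ((T*rho)*(T*rho)) by ring.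
        replace (4 * r^2) with ((2*r)*(2*r)) by ring.
        apply Rmult_le_compat; lra. }
      assert (Hsr1 : s - rho <= 3 * r) by nra.
      assert (Hsr2 : rho - s <= 3 * r) by nra.
      assert (Hs43 : s <= 4 / 3 * rho) by nra.
      assert (4 * s * rho * T ^ 2 <= 16/3 * (T^2 * rho^2)) by nra.
      nra.
    + assert (Hm : 16 * r ^ 2 <= 16 * r ^ 2) by lra.
      destruct (H (16 * r ^ 2) beta Hm Hb) as [n [Hn Hsys]].
      apply (Key _ Hm ltac:(apply sqrt_pos) n Hn Hsys).
      unfold system in Hsys.
      replace (sqrt (16 * r ^ 2)) with (4 * r) in Hsys
        by (rewrite <- sqrt_sq_pos with (x := 4*r) by lra; f_equal; ring).
      destruct Hsys as [[H1 H2] H3].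
      destruct (sin_sq_dist (INR n * alpha - beta)) as [Hd0 HS]. rewrite HS.
      pose proof (sin_bounds_d _ Hd0) as HT.
      assert (Hs0 : 0 <= sqrt (INR n)) by apply sqrt_pos.
      assert (Hss : sqrt (INR n) ^ 2 = INR n) by (apply pow2_sqrt; apply pos_INR).
      set (s := sqrt (INR n)) in *.
      set (d := dist_int (INR n * alpha - beta)) in *.
      set (T := sin (PI * d)) in *.
      assert (Hd8 : d <= 1/8).
      { assert (E : r / (2 * (4 * r)) = 1/8) by (field; lra). lra. }
      assert (HT2 : T ^ 2 <= 1/4) by nra.
      assert (Hs28 : s ^ 2 <= 28 * r ^ 2) by nra.
      assert (0 <= (s * rho) * (1 - 4 * T^2)) by (apply Rmult_le_pos; [apply Rmult_le_pos|]; lra).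
      assert (4 * s * rho * T ^ 2 <= s * rho) by nra.
      assert (s ^ 2 - s * rho + rho ^ 2 < 36 * r ^ 2).
      { destruct (Rle_lt_dec rho s); nra. }
      nra.
Qed.
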